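(* Let $G=(V,E)$ be a finite simple oriented complete graph on $N$ vertices. Then $G$ can be transformed into a directed acyclic graph by a sequence of at most $\frac{|E|}{2}=\frac{N^2-N}{4}$ Single Edge Flips such that the number of directed 3-cycles strictly decreases with each application of a Single Edge Flip.
   Context: A simple oriented graph is a pair $G=(V,E)$ with $E\subseteq\{(i,j)\in V\times V: i\neq j\}$ such that $(i,j)\in E$ implies $(j,i)\notin E$. It is complete if for all distinct $i,j\in V$ exactly one of $(i,j),(j,i)$ lies in $E$ (a tournament). For $(i,j)\in E$, the Single Edge Flip $\mathrm{SEF}_{i,j}$ maps $G$ to $(V,(E\setminus\{(i,j)\})\cup\{(j,i)\})$. A directed 3-cycle is a set of three vertices $\{a,b,c\}$ with $(a,b),(b,c),(c,a)\in E$. *)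

(* Defs.v *)
From mathcomp Require Import all_boot.
Set Implicit Arguments. Unset Strict Implicit. Unset Printing Implicit Defensive.

(* An oriented graph on a finite vertex type V is given by its edge set
   E : {set V * V}; (i,j) \in E means the edge is directed i -> j. *)

Definition simple_oriented (V : finType) (E : {set V * V}) : Prop :=
  forall i j : V, (i, j) \in E -> (i != j) /\ ((j, i) \notin E).

Definition complete (V : finType) (E : {set V * V}) : Prop :=
  forall i j : V, i != j -> (((i, j) \in E) (+) ((j, i) \in E)).

Definition SEF (V : finType) (E : {set V * V}) (e : V * V) : {set V * V} :=
  (E :\ e) :|: [set (e.2, e.1)].

Definition three_cycles (V : finType) (E : {set V * V}) : {set {set V}} :=
  [set S : {set V} | [exists a : V, exists b : V, exists c : V,
     [&& S == [set a; b; c], (a, b) \in E, (b, c) \in E & (c, a) \in E]]].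

Definition num_three_cycles (V : finType) (E : {set V * V}) : nat :=
  #|three_cycles E|.

Definition acyclic (V : finType) (E : {set V * V}) : Prop :=
  forall (x : V) (p : seq V),
    p != [::] -> path (fun u v => (u, v) \in E) x p -> last x p != x.

Fixpoint decreasing_flip_seq (V : finType) (E : {set V * V}) (s : seq (V * V))
  : Prop :=
  match s with
  | [::] => acyclic E
  | e :: s' =>
      [/\ e \in E, num_three_cycles (SEF E e) < num_three_cycles E
        & decreasing_flip_seq (SEF E e) s']
  end.

(* Main.v *)
Require Import Defs.
From mathcomp Require Import all_boot zify.
Set Implicit Arguments. Unset Strict Implicit. Unset Printing Implicit Defensive.

Section S.
Variable V : finType.
Implicit Types (E : {set V * V}).

Lemma inSEF E u v x y :
  ((x, y) \in SEF E (u, v)) = (((x, y) != (u, v)) && ((x, y) \in E)) || ((x == v) && (y == u)).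
Proof. by rewrite /SEF !inE /= xpair_eqE. Qed.

Lemma SEF_simple E u v : simple_oriented E -> (u, v) \in E -> simple_oriented (SEF E (u, v)).
Proof.
move=> HS Huv x y; have [Huv1 Hvu] := HS _ _ Huv.
rewrite !inSEF !xpair_eqE.
case/orP.
- case/andP=> Hne Hxy; have [Hxy1 Hyx] := HS _ _ Hxy; split => //.
  by rewrite (negbTE Hyx) andbF /= andbC.
- case/andP => /eqP -> /eqP ->; split; first by rewrite eq_sym.
  by rewrite !eqxx (negbTE Huv1).
Qed.

Lemma SEF_complete E u v : simple_oriented E -> complete E -> (u, v) \in E ->
  complete (SEF E (u, v)).
Proof.
move=> HS HC Huv x y Hxy; have [Huv1 Hvu] := HS _ _ Huv.
have := HC x y Hxy.
rewrite !inSEF !xpair_eqE.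
have [Exu|Hxu] := eqVneq x u; have [Eyv|Hyv] := eqVneq y v;
  have [Exv|Hxv] := eqVneq x v; have [Eyu|Hyu] := eqVneq y u; subst => //=;
  rewrite ?eqxx ?(negbTE Huv1) ?(negbTE Hvu) ?(negbTE Hxu) ?(negbTE Hyv) ?(negbTE Hxv) ?(negbTE Hyu) ?Huv /=;
  try by rewrite ?eqxx in Hxy.
all: try by rewrite eq_sym (negbTE Huv1).
all: try by rewrite ?orbF ?andbF.
Qed.

Definition O E x := [set k | (x, k) \in E].
Definition I E x := [set k | (k, x) \in E].
Definition d E x := #|O E x|.

Lemma set3C (a b c : V) : [set a; b; c] = [set b; c; a] /\ [set a; b; c] = [set c; a; b]
  /\ [set a; b; c] = [set b; a; c] /\ [set a; b; c] = [set c; b; a] /\ [set a; b; c] = [set a; c; b].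
Proof.
by split; [|split; [|split; [|split]]]; apply/setP => z; rewrite !inE;
  case: (z == a); case: (z == b); case: (z == c).
Qed.

Lemma cyc_cases E a b c u v : (a, b) \in E -> (b, c) \in E -> (c, a) \in E ->
  u \in [set a; b; c] -> v \in [set a; b; c] -> u != v ->
  exists k, [set a; b; c] = [set u; v; k] /\
   (((u, v) \in E /\ (v, k) \in E /\ (k, u) \in E) \/ ((v, u) \in E /\ (u, k) \in E /\ (k, v) \in E)).
Proof.
move=> h1 h2 h3; rewrite !inE => hu hv huv.
have [e1 [e2 [e3 [e4 e5]]]] := set3C a b c.
move: huv; case/orP: hu => [/orP [] | ] /eqP ->; case/orP: hv => [/orP [] | ] /eqP -> huv;
  rewrite ?eqxx // in huv.
- by exists c; split => //; left.
- by exists b; split => //; right.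
- by exists c; split => //; right.
- by exists a; split => //; left.
- by exists b; split => //; left.
- by exists a; split => //; right.
Qed.

Lemma cyc_same E E' (S : {set V}) : (forall x y, x \in S -> y \in S -> ((x, y) \in E) = ((x, y) \in E')) ->
  (S \in three_cycles E) = (S \in three_cycles E').
Proof.
move=> H; rewrite !inE.
apply/existsP/existsP => -[a /existsP [b /existsP [c /and4P [/eqP HS h1 h2 h3]]]];
  exists a; apply/existsP; exists b; apply/existsP; exists c; subst;
  rewrite eqxx /=; rewrite ?H // in h1 h2 h3 *; rewrite ?h1 ?h2 ?h3 // ?inE ?eqxx ?orbT //.
Qed.

Lemma decrease E u v : simple_oriented E -> complete E -> (u, v) \in E -> d E u <= d E v ->
  num_three_cycles (SEF E (u, v)) < num_three_cycles E.
Proof.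
move=> HS HC Huv Hd.
have [Huv1 Hvu] := HS _ _ Huv.
have Hnl : forall x, (x, x) \notin E.
  by move=> x; apply/negP => /HS []; rewrite eqxx.
set P := [set S : {set V} | (u \in S) && (v \in S)].
set E1 := SEF E (u, v).
have Hout : three_cycles E1 :\: P = three_cycles E :\: P.
  apply/setP => S; rewrite !in_setD [S \in P]inE; case HP: ((u \in S) && (v \in S)) => //=.
  apply: cyc_same => x y hx hy; rewrite /E1 inSEF xpair_eqE.
  case: (boolP ((x == u) && (y == v))) => [/andP [/eqP ex /eqP ey]| _].
    by rewrite -ex -ey hx hy in HP.
  case: (boolP ((x == v) && (y == u))) => [/andP [/eqP ex /eqP ey]| _].
    by rewrite -ex -ey hx hy in HP.
  by rewrite /= orbF.
set K1 := O E v :&: I E u.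
set K2 := O E u :&: I E v.
set f := fun k : V => [set u; v; k].
have h1 : three_cycles E1 :&: P \subset f @: K2.
  apply/subsetP => S; rewrite in_setI [S \in P]inE => /andP [HC1 /andP [hu hv]].
  move: HC1; rewrite inE => /existsP [a /existsP [b /existsP [c /and4P [/eqP HSe h1 h2 h3]]]].
  subst S.
  have [k [Hk [[Huv' _]|[_ [Huk Hkv]]]]] := cyc_cases h1 h2 h3 hu hv Huv1.
    by move: Huv'; rewrite /E1 inSEF eqxx /= (negbTE Huv1).
  move: Huk Hkv; rewrite /E1 !inSEF !xpair_eqE !eqxx /= (negbTE Huv1) (eq_sym v u) (negbTE Huv1) !andbF !orbF /= !andbT.
  move=> /andP [_ Huk] /andP [_ Hkv].
  by rewrite Hk; apply/imsetP; exists k => //; rewrite !inE Huk Hkv.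
have h2 : f @: K1 \subset three_cycles E :&: P.
  apply/subsetP => S /imsetP [k]; rewrite !inE => /andP [Hvk Hku] ->.
  rewrite /f !inE !eqxx orbT /= andbT; apply/existsP; exists u; apply/existsP; exists v;
    apply/existsP; exists k; by rewrite eqxx Huv Hvk Hku.
have h3 : #|f @: K1| = #|K1|.
  apply: card_in_imset => k k'; rewrite !inE => /andP [Hvk Hku] /andP [Hvk' Hku'] Hf.
  have : k \in f k by rewrite !inE eqxx orbT.
  rewrite Hf !inE => /orP [/orP [/eqP Ek|/eqP Ek]|/eqP //]; subst.
    by rewrite (negbTE (Hnl _)) in Hku.
  by rewrite (negbTE (Hnl _)) in Hvk.
have h4 : #|K2| < #|K1|.
  set Y := O E u :\: I E v.
  set X := O E v :\: I E u.
  have eY := cardsID (I E v) (O E u).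
  have eX := cardsID (I E u) (O E v).
  have hXY : X \proper Y.
    apply/properP; split.
      apply/subsetP => k; rewrite !inE => /andP [Hku Hvk].
      have [_ Hkv] := HS _ _ Hvk.
      rewrite Hkv /=.
      have Hku1 : k != u by apply/eqP => Ek; subst; rewrite Hvk in Hvu.
      by have := HC _ _ Hku1; rewrite (negbTE Hku).
    by exists v; rewrite !inE (negbTE (Hnl v)) /= ?andbF.
  have := proper_card hXY.
  move: Hd; rewrite /d -eY -eX /K1 /K2 -/X -/Y; lia.
have e1 := cardsID P (three_cycles E1).
have e2 := cardsID P (three_cycles E).
rewrite /num_three_cycles -e1 -e2 Hout.
have := subset_leq_card h1; have := subset_leq_card h2; have := leq_imset_card f K2.
move=> a b c; rewrite h3 in b; rewrite ltn_add2r; apply: (leq_ltn_trans c); apply: (leq_ltn_trans a); exact: (leq_trans h4 b).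
Qed.

Lemma cardIsum (R : {set V}) (P : pred V) :
  #|R :&: [set y | P y]| = \sum_(y in R) (P y : nat).
Proof.
rewrite -sum1_card (eq_bigl (fun y => (y \in R) && P y)); last by move=> y; rewrite !inE.
rewrite big_mkcondr /=; apply: eq_bigr => i _; by case: (P i).
Qed.

Lemma sum_out_in E (R : {set V}) :
  \sum_(x in R) #|R :&: O E x| = \sum_(x in R) #|R :&: I E x|.
Proof.
rewrite (eq_bigr (fun x => \sum_(y in R) (((x, y) \in E) : nat))); last by move=> x _; exact: cardIsum.
rewrite [RHS](eq_bigr (fun x => \sum_(y in R) (((y, x) \in E) : nat))); last by move=> x _; exact: cardIsum.
exact: exchange_big.
Qed.

Lemma d_SEF E u v : simple_oriented E -> (u, v) \in E ->
  [/\ d (SEF E (u, v)) v = (d E v).+1, (d (SEF E (u, v)) u).+1 = d E u &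
      forall x, x != u -> x != v -> d (SEF E (u, v)) x = d E x].
Proof.
move=> HS Huv; have [Huv1 Hvu] := HS _ _ Huv.
rewrite /d; split.
- have -> : O (SEF E (u, v)) v = u |: O E v.
    apply/setP => k; rewrite !inE /= !xpair_eqE eqxx (eq_sym v u) (negbTE Huv1) /=.
    by rewrite orbC.
  by rewrite cardsU1 inE (negbTE Hvu).
- have -> : O (SEF E (u, v)) u = O E u :\ v.
    apply/setP => k; rewrite !inE /= !xpair_eqE eqxx (negbTE Huv1) /= orbF.
    by [].
  by rewrite (cardsD1 v (O E u)) inE Huv.
- move=> x Hxu Hxv; apply: eq_card => k.
  by rewrite !inE /= !xpair_eqE (negbTE Hxu) (negbTE Hxv) /= orbF.
Qed.

Definition Inv E (R : {set V}) := exists (f : V -> nat) (c : nat),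
  [/\ (forall x, x \in R -> f x = c), (forall x, x \notin R -> f x < c) &
      (forall x y, (x, y) \in E -> (x \notin R) || (y \notin R) -> f x < f y)].

Lemma Inv_SEF E R u v : Inv E R -> u \in R -> v \in R -> Inv (SEF E (u, v)) R.
Proof.
move=> [f [c [H1 H2 H3]]] hu hv; exists f, c; split => // x y.
rewrite inSEF => /orP [/andP [_ /H3] //|/andP [/eqP -> /eqP ->]].
by rewrite hu hv.
Qed.

Lemma Inv_noout E R x y : Inv E R -> x \in R -> y \notin R -> (x, y) \notin E.
Proof.
move=> [f [c [H1 H2 H3]]] hx hy; apply/negP => /H3.
rewrite hy orbT => /(_ isT); rewrite (H1 _ hx) => h.
by have := H2 _ hy; rewrite ltnNge (ltnW h).
Qed.

Lemma d_R E R x : Inv E R -> x \in R -> d E x = #|R :&: O E x|.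
Proof.
move=> HI hx; rewrite /d; apply: eq_card => k; rewrite !inE.
case hk: (k \in R) => //=; apply/negP => hE.
by have := Inv_noout HI hx (negbT hk); rewrite hE.
Qed.

Lemma inner (R : {set V}) v : v \in R -> forall n E, simple_oriented E -> complete E -> Inv E R ->
  (forall x, x \in R -> d E x <= d E v) -> #|R :&: I E v| = n ->
  exists s E', size s = n /\ [/\ simple_oriented E', complete E', Inv E' R,
    (forall u, u \in R -> (u, v) \notin E') &
    (forall t, decreasing_flip_seq E' t -> decreasing_flip_seq E (s ++ t))].
Proof.
move=> hv; elim => [|n IH] E HS HC HI Hmax Hn.
  exists [::], E; split => //; split => // u hu; apply/negP => he.
  move/cards0_eq: Hn => /setP /(_ u); by rewrite !inE hu he.
have : 0 < #|R :&: I E v| by rewrite Hn.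
case/card_gt0P => u; rewrite !inE => /andP [hu Huv].
have [Huv1 Hvu] := HS _ _ Huv.
have [D1 D2 D3] := d_SEF HS Huv.
have Hdec := decrease HS HC Huv (Hmax _ hu).
have HS1 := SEF_simple HS Huv.
have HC1 := SEF_complete HS HC Huv.
have HI1 := Inv_SEF HI hu hv.
have Hmax1 : forall x, x \in R -> d (SEF E (u, v)) x <= d (SEF E (u, v)) v.
  move=> x hx; rewrite D1.
  have [->|Hxv] := eqVneq x v; first by rewrite D1.
  have [->|Hxu] := eqVneq x u.
    have := Hmax _ hu; rewrite -D2; lia.
  by rewrite D3 // leqW // Hmax.
have Hn1 : #|R :&: I (SEF E (u, v)) v| = n.
  have -> : R :&: I (SEF E (u, v)) v = (R :&: I E v) :\ u.
    apply/setP => w; rewrite !inE /= !xpair_eqE eqxx (eq_sym v u) (negbTE Huv1) /= !andbT !andbF orbF.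
    by rewrite andbCA.
  move: Hn; rewrite (cardsD1 u (R :&: I E v)) !inE hu Huv /=; lia.
have [s [E' [Hs [HS' HC' HI' Hsrc Ht]]]] := IH _ HS1 HC1 HI1 Hmax1 Hn1.
exists ((u, v) :: s), E'; split; first by rewrite /= Hs.
split => // t /Ht Ht'; by split.
Qed.

Lemma acyc_f E (f : V -> nat) : (forall x y, (x, y) \in E -> f x < f y) -> acyclic E.
Proof.
move=> H.
have W : forall p x, path (fun u v => (u, v) \in E) x p -> f x <= f (last x p).
  elim => [|y p IH] x //= /andP [hxy hp].
  exact: leq_trans (ltnW (H _ _ hxy)) (IH _ hp).
move=> x [|y p] // _ /= /andP [hxy hp].
apply/eqP => Heq; have := leq_trans (H _ _ hxy) (W _ _ hp); rewrite Heq ltnn.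
done.
Qed.

Lemma out_in E (R : {set V}) x : simple_oriented E -> complete E -> x \in R ->
  #|R :&: O E x| + #|R :&: I E x| = #|R| - 1.
Proof.
move=> HS HC hx.
have Hnl : forall x, (x, x) \notin E.
  by move=> z; apply/negP => /HS []; rewrite eqxx.
have -> : #|R| - 1 = #|R :\ x| by rewrite (cardsD1 x R) hx /= subSS subn0.
have hU : (R :&: O E x) :|: (R :&: I E x) = R :\ x.
  apply/setP => k; rewrite !inE.
  case: (k \in R); rewrite ?andbF ?andbT //=.
  have [->|hk] := eqVneq k x; first by rewrite (negbTE (Hnl x)).
  have := HC _ _ hk; rewrite addbC; case: ((x, k) \in E); case: ((k, x) \in E) => //.
have hI : (R :&: O E x) :&: (R :&: I E x) = set0.
  apply/setP => k; rewrite !inE.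
  case hxk: ((x, k) \in E); rewrite ?andbF //=.
  by have [_ /negbTE ->] := HS _ _ hxk; rewrite !andbF.
by rewrite -hU -(addn0 #|_ :|: _|) -(cards0 V) -hI cardsUI.
Qed.

Lemma sum_out2 E (R : {set V}) : simple_oriented E -> complete E ->
  2 * \sum_(x in R) #|R :&: O E x| = #|R| * (#|R| - 1).
Proof.
move=> HS HC.
rewrite mul2n -addnn {2}sum_out_in -big_split /=.
rewrite (eq_bigr (fun _ => #|R| - 1)); last by move=> x hx; exact: out_in.
by rewrite sum_nat_const.
Qed.

Lemma outer n : forall (R : {set V}) E, #|R| = n -> simple_oriented E -> complete E -> Inv E R ->
  exists s, 4 * size s <= n * (n - 1) /\ decreasing_flip_seq E s.
Proof.
elim: n => [|n IH] R E hR HS HC HI.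
  exists [::]; split => //=.
  have R0 := cards0_eq hR; subst R.
  case: HI => f [c [_ _ H3]]; apply: (acyc_f (f := f)) => x y hxy.
  by apply: H3 => //; rewrite inE.
have : 0 < #|R| by rewrite hR.
case/card_gt0P => x0 hx0.
case: (arg_maxnP (fun x => d E x) hx0) => v hv Hmax.
have Hnl : forall x, (x, x) \notin E.
  by move=> z; apply/negP => /HS []; rewrite eqxx.
have Hs2 := sum_out2 R HS HC.
have Hle : \sum_(x in R) #|R :&: O E x| <= \sum_(x in R) #|R :&: O E v|.
  apply: leq_sum => x hx; rewrite -!(d_R HI) //; exact: Hmax.
rewrite sum_nat_const in Hle.
have Hov := out_in HS HC hv.
rewrite hR subSS subn0 in Hs2 Hov.
have Hin : 2 * #|R :&: I E v| <= n.
  have : n.+1 * n <= n.+1 * (2 * #|R :&: O E v|).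
    rewrite -Hs2 hR in Hle *; lia.
  rewrite leq_pmul2l // => h; lia.
have [s1 [E1 [Hs1 [HS1 HC1 HI1 Hsrc Ht]]]] :=
  @inner R v hv _ E HS HC HI Hmax erefl.
have HI2 : Inv E1 (R :\ v).
  case: (HI1) => f [c [H1 H2 H3]].
  exists (fun x => if x == v then c else if x \in R then c.+1 else f x), c.+1; split.
  - move=> x; rewrite !inE => /andP [/negbTE -> ->] //.
  - move=> x; rewrite !inE negb_and negbK; case: eqP => //= _ hx.
    by rewrite (negbTE hx) ltnS ltnW // H2.
  - move=> x y; rewrite !inE !negb_and !negbK.
    have [->|Hxv] := eqVneq x v; have [->|Hyv] := eqVneq y v; rewrite ?eqxx /= => hxy hc.
    + by have [] := HS1 _ _ hxy; rewrite eqxx.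
    + case hy: (y \in R) => //.
      by have := Inv_noout (HI1) hv (negbT hy); rewrite hxy.
    + case hx: (x \in R); first by have := Hsrc _ hx; rewrite hxy.
      by apply: H2; rewrite hx.
    + case hx: (x \in R); case hy: (y \in R) => //.
      * by move: hc; rewrite hx hy.
      * by have := Inv_noout (HI1) hx (negbT hy); rewrite hxy.
      * by rewrite ltnS ltnW // H2 // hx.
      * by apply: H3 => //; rewrite hx.
have hR' : #|R :\ v| = n by move: hR; rewrite (cardsD1 v R) (hv : v \in R) add1n => -[].
have [s2 [Hs2' Hd2]] := IH _ _ hR' HS1 HC1 HI2.
exists (s1 ++ s2); split; last exact: Ht.
rewrite size_cat Hs1; move: Hin Hs2'; rewrite subSS subn0; nia.
Qed.

Lemma cardE E : simple_oriented E -> complete E -> 2 * #|E| = #|V| * (#|V| - 1).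
Proof.
move=> HS HC; rewrite -cardsT -(sum_out2 [set: V] HS HC); congr (2 * _).
rewrite (eq_bigr (fun x => \sum_(y in [set: V]) (((x, y) \in E) : nat))); last first.
  by move=> x _; exact: cardIsum.
rewrite pair_big /= -sum1_card big_mkcond /=.
rewrite [RHS](eq_bigl (fun _ => true)); last by move=> p; rewrite !in_setT.
apply: eq_bigr => -[x y] _ /=; by case: ((x, y) \in E).
Qed.
End S.

Theorem theoremA3 (V : finType) (E : {set V * V}) :
  simple_oriented E -> complete E ->
  exists s : seq (V * V), 2 * size s <= #|E| /\ decreasing_flip_seq E s.
Proof.
move=> HS HC.
have HI : Inv E [set: V].
  exists (fun _ => 0), 0; split => //; first by move=> x; rewrite inE.
  by move=> x y _; rewrite !inE.
have [s [Hs Hd]] := outer (erefl #|[set: V]|) HS HC HI.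
exists s; split => //.
have := cardE HS HC; rewrite cardsT in Hs; lia.
Qed.
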